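(* Consider the bounded-reward setting (all rewards in $[0,1]$, all mean rewards $\mu(s,a)\in(0,1]$). Then: (1) There exist a finite episodic MDP $(\mathcal S,\mathcal A,H,\mathbb P,\mu)$ and a target policy $\pi^+$ such that no reward manipulation attack satisfying the constraint below achieves the attack objective. Here a reward manipulation attack (in expectation) is specified by values $\tilde\mu_h(s,a)$ for all $h\le H$, $s\in\mathcal S$, $a\in\mathcal A$ such that $\tilde\mu_h(s,\pi^+_h(s))=\mu(s,\pi^+_h(s))$ and $\tilde\mu_h(s,a)\in[0,1]$ for $a\neq\pi^+_h(s)$; actions and transitions are not modified; the manipulated values $\tilde V^\pi_h$ are the values of policies in the MDP with transitions $\mathbb P$ and step-$h$ mean rewards $\tilde\mu_h$. (2) There exist a finite episodic MDP and a target policy $\pi^+$ such that no action manipulation attack satisfying the constraint below achieves the attack objective. Here an action manipulation attack is specified by (possibly randomized) maps assigning to each $h\le H$, $s\in\mathcal S$, $a\in\mathcal A$ an executed action $a^o\in\mathcal A$, with $a^o=a$ whenever $a=\pi^+_h(s)$; rewards are not contaminated; when the learner plays $a$ in state $s$ at step $h$, the environment produces mean reward $\mu(s,a^o)$ and next state $s'\sim\mathbb P(\cdot\mid s,a^o)$; the manipulated values $\tilde V^\pi_h$ are the values of policies in this induced environment.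
   Context: An episodic MDP $(\mathcal S,\mathcal A,H,\mathbb P,\mu)$ has finite state set $\mathcal S$, finite action set $\mathcal A$, horizon $H$ (steps per episode), stationary transition kernel $\mathbb P(\cdot\mid s,a)$ and mean reward $\mu(s,a)$. A deterministic policy $\pi=(\pi_1,\dots,\pi_H)$ consists of maps $\pi_h:\mathcal S\to\mathcal A$. The value $V^\pi_h(s)=\mathbb E[\sum_{h'=h}^H \mu(s_{h'},\pi_{h'}(s_{h'}))\mid s_h=s]$, and $\tilde V^\pi_h(s)$ denotes the analogous expected cumulative reward from step $h$ in state $s$ computed in the environment as perceived by the learner under the attack (manipulated rewards and/or manipulated dynamics). The attack objective for a target policy $\pi^+$ is: for all $h\le H$, all $s\in\mathcal S$ and every deterministic policy $\pi$ with $\pi_h(s)\neq\pi^+_h(s)$, one has $\tilde V^\pi_h(s)<\tilde V^{\pi^+}_h(s)$. *)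

(* Defs.v *)
From HB Require Import structures.
From mathcomp Require Import all_boot all_order all_algebra.
From mathcomp Require Import reals.
Set Implicit Arguments. Unset Strict Implicit. Unset Printing Implicit Defensive.
Import Order.TTheory GRing.Theory Num.Theory.
Local Open Scope ring_scope.

(* Steps are 0-based: h = 0, ..., H-1 (the paper's h = 1..H). *)

Definition is_kernel (R : realType) (S A : finType) (P : S -> A -> S -> R) : Prop :=
  forall s a, (forall s', 0 <= P s a s') /\ \sum_(s' : S) P s a s' = 1.

Definition bounded_means (R : realType) (S A : finType) (mu : S -> A -> R) : Prop :=
  forall s a, 0 < mu s a <= 1.

Fixpoint val_rem (R : realType) (S A : finType) (r : nat -> S -> A -> R)
  (T : nat -> S -> A -> S -> R) (pi : nat -> S -> A) (k h : nat) (s : S) : R :=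
  match k with
  | 0 => 0
  | k'.+1 => r h s (pi h s)
             + \sum_(s' : S) T h s (pi h s) s' * val_rem r T pi k' h.+1 s'
  end.

Definition value (R : realType) (S A : finType) (H : nat) (r : nat -> S -> A -> R)
  (T : nat -> S -> A -> S -> R) (pi : nat -> S -> A) (h : nat) (s : S) : R :=
  val_rem r T pi (H - h) h s.

Definition attack_objective (R : realType) (S A : finType) (H : nat)
  (r : nat -> S -> A -> R) (T : nat -> S -> A -> S -> R) (pip : nat -> S -> A) : Prop :=
  forall (h : nat) (s : S) (pi : nat -> S -> A), (h < H)%N ->
    pi h s != pip h s -> value H r T pi h s < value H r T pip h s.

Definition valid_reward_attack (R : realType) (S A : finType) (H : nat)
  (mu : S -> A -> R) (pip : nat -> S -> A) (mut : nat -> S -> A -> R) : Prop :=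
  forall (h : nat) (s : S) (a : A), (h < H)%N ->
    (a = pip h s -> mut h s a = mu s a) /\
    (a != pip h s -> 0 <= mut h s a <= 1).

Definition valid_action_attack (R : realType) (S A : finType) (H : nat)
  (pip : nat -> S -> A) (q : nat -> S -> A -> A -> R) : Prop :=
  forall (h : nat) (s : S) (a : A), (h < H)%N ->
    (forall ao, 0 <= q h s a ao) /\ \sum_(ao : A) q h s a ao = 1 /\
    (a = pip h s -> q h s a a = 1).

Definition act_reward (R : realType) (S A : finType) (mu : S -> A -> R)
  (q : nat -> S -> A -> A -> R) : nat -> S -> A -> R :=
  fun h s a => \sum_(ao : A) q h s a ao * mu s ao.

Definition act_trans (R : realType) (S A : finType) (P : S -> A -> S -> R)
  (q : nat -> S -> A -> A -> R) : nat -> S -> A -> S -> R :=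
  fun h s a s' => \sum_(ao : A) q h s a ao * P s ao s'.

(* Main.v *)
Require Import Defs.
From HB Require Import structures.
From mathcomp Require Import all_boot all_order all_algebra.
From mathcomp Require Import reals lra.
Import Order.TTheory GRing.Theory Num.Theory.
Local Open Scope ring_scope.

Section X.
Variable R : realType.

Definition P1 (s : 'I_2) (a : 'I_2) (s' : 'I_2) : R :=
  ((nat_of_ord s' == (if ((s : nat) == 0%N) && ((a : nat) == 0%N) then 0 else 1))%N)%:R.
Definition mu1 (s : 'I_2) (a : 'I_2) : R := if (s : nat) == 0%N then 2^-1 else 1.
Definition pip1 : nat -> 'I_2 -> 'I_2 := fun _ _ => ord0.
Definition pi1 : nat -> 'I_2 -> 'I_2 := fun h _ => if h == 0%N then ord_max else ord0.

Lemma part1 : is_kernel P1 /\ bounded_means mu1 /\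
     ~ (exists mut : nat -> 'I_2 -> 'I_2 -> R,
          valid_reward_attack 2 mu1 pip1 mut /\
          attack_objective 2 mut (fun _ => P1) pip1).
Proof.
split.
  move=> s a; split; first by move=> s'; rewrite /P1; case: eqP.
  by rewrite !big_ord_recr big_ord0 /P1 /=; case: (s : nat) => [|?]; case: (a : nat) => [|?] /=;
    rewrite ?add0r ?addr0.
split.
  move=> s a; rewrite /mu1; case: eqP => _; last by rewrite ltr01 lexx.
  by rewrite invr_gt0 ltr0n invf_le1 ?ltr0n // ler1n.
case=> mut [Hv Ho].
have := Ho 0%N ord0 pi1 isT isT.
rewrite /value /= !big_ord_recl !big_ord0 /=.
rewrite !mulr0 !addr0 /pi1 /pip1 /P1 /= !mul0r !mul1r !add0r !addr0.
have e0 := (Hv 0%N ord0 ord0 isT).1 erefl.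
have e1 := (Hv 1%N ord0 ord0 isT).1 erefl.
have e1' := (Hv 1%N (lift ord0 ord0) ord0 isT).1 erefl.
have [_ /(_ isT) /andP[g _]] := Hv 0%N ord0 ord_max isT.
rewrite e0 e1 e1' /mu1 /=.
apply/negP; rewrite -leNgt.
lra.
Qed.

Definition P2 (s : 'I_1) (a : 'I_2) (s' : 'I_1) : R := 1.
Definition mu2 (s : 'I_1) (a : 'I_2) : R := 2^-1.
Definition pip2 : nat -> 'I_1 -> 'I_2 := fun _ _ => ord0.
Definition pi2 : nat -> 'I_1 -> 'I_2 := fun _ _ => ord_max.

Lemma part2 : is_kernel P2 /\ bounded_means mu2 /\
     ~ (exists q : nat -> 'I_1 -> 'I_2 -> 'I_2 -> R,
          valid_action_attack 1 pip2 q /\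
          attack_objective 1 (act_reward mu2 q) (act_trans P2 q) pip2).
Proof.
split.
  move=> s a; split; first by move=> s'; rewrite /P2 ler01.
  by rewrite big_ord_recl big_ord0 addr0.
split.
  move=> s a; rewrite /mu2.
  by rewrite invr_gt0 ltr0n invf_le1 ?ltr0n // ler1n.
case=> q [Hv Ho].
have := Ho 0%N ord0 pi2 isT isT.
rewrite /value /= big_ord_recl big_ord0 /act_reward /pi2 /pip2 /mu2 /=.
rewrite !big_ord_recl !big_ord0 /=.
have [_ [s1 _]] := Hv 0%N ord0 ord0 isT.
have [_ [s2 _]] := Hv 0%N ord0 ord_max isT.
move: s1 s2; rewrite !big_ord_recl !big_ord0 /=.
move=> s1 s2; rewrite !mulr0 !addr0 => H; lra.
Qed.

End X.

Theorem theorem1 (R : realType) :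
  (exists (nS nA H : nat) (P : 'I_nS -> 'I_nA -> 'I_nS -> R)
          (mu : 'I_nS -> 'I_nA -> R) (pip : nat -> 'I_nS -> 'I_nA),
     is_kernel P /\ bounded_means mu /\
     ~ (exists mut : nat -> 'I_nS -> 'I_nA -> R,
          valid_reward_attack H mu pip mut /\
          attack_objective H mut (fun _ => P) pip))
  /\
  (exists (nS nA H : nat) (P : 'I_nS -> 'I_nA -> 'I_nS -> R)
          (mu : 'I_nS -> 'I_nA -> R) (pip : nat -> 'I_nS -> 'I_nA),
     is_kernel P /\ bounded_means mu /\
     ~ (exists q : nat -> 'I_nS -> 'I_nA -> 'I_nA -> R,
          valid_action_attack H pip q /\
          attack_objective H (act_reward mu q) (act_trans P q) pip)).
Proof.
split.
  exact: (ex_intro _ 2%N (ex_intro _ 2%N (ex_intro _ 2%N (ex_intro _ (@P1 R) (ex_intro _ (@mu1 R) (ex_intro _ pip1 (@part1 R))))))).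
exact: (ex_intro _ 1%N (ex_intro _ 2%N (ex_intro _ 1%N (ex_intro _ (@P2 R) (ex_intro _ (@mu2 R) (ex_intro _ pip2 (@part2 R))))))).
Qed.
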